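(* Let $\mathcal F=(F,\rightarrowtail)$ be a finite argumentation framework. If $A\subseteq F$ is weakly admissible, then $A$ is contained in some weakly complete extension of $\mathcal F$.
   Context: An argumentation framework $\mathcal F=(F,\rightarrowtail)$ consists of a finite set $F$ of arguments and an attack relation $\rightarrowtail\subseteq F\times F$. An argument $y$ attacks a set $A$ if $y\rightarrowtail a$ for some $a\in A$; $A^+=\{x\in F:\exists a\in A,\ a\rightarrowtail x\}$. A set is conflict-free if none of its elements attacks one of its elements. For $A\subseteq F$, the $A$-reduct $\mathcal F^A$ is the restriction of $\mathcal F$ to $F\setminus(A\cup A^+)$. Weak admissibility (defined recursively on the size of the framework): $A\subseteq F$ is weakly admissible in $\mathcal F$ if $A$ is conflict-free and for every $y\in F$ attacking $A$, $y$ belongs to no weakly admissible set of $\mathcal F^A$. A weakly complete labeling is a map $L:F\to\{\mathtt{in},\mathtt{out},\mathtt{undec}\}$ such that for every $a\in F$: if $L(a)=\mathtt{in}$ then no attacker of $a$ is labeled $\mathtt{in}$; if $L(a)=\mathtt{out}$ then some attacker of $a$ is labeled $\mathtt{in}$; if $L(a)=\mathtt{undec}$ then some attacker of $a$ is labeled $\mathtt{undec}$ and no attacker of $a$ is labeled $\mathtt{in}$. A set is a weakly complete extension if it equals $\{a:L(a)=\mathtt{in}\}$ for some weakly complete labeling $L$. *)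

(* Defs.v *)
(* An argumentation framework is represented by a finite type
   T, a finite set of arguments F : {set T} and an attack relation att : rel T;
   the framework is (F, att restricted to F). *)
From mathcomp Require Import all_boot.
Set Implicit Arguments.
Unset Strict Implicit.
Unset Printing Implicit Defensive.

Section AF.
Variable T : finType.
Variable att : rel T.

Definition conflict_free (A : {set T}) : bool :=
  [forall a in A, forall b in A, ~~ att a b].

Definition attacks_set (y : T) (A : {set T}) : bool := [exists a in A, att y a].

Definition att_plus (F A : {set T}) : {set T} :=
  [set x in F | [exists a in A, att a x]].

Definition reduct (F A : {set T}) : {set T} := F :\: (A :|: att_plus F A).

(* Weak admissibility, by recursion on a fuel bounding the size of the
   framework (each recursive call is on a reduct by a nonempty set, hence on
   a strictly smaller framework, so fuel #|F| suffices). *)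
Fixpoint wadm_fuel (n : nat) (F A : {set T}) : bool :=
  match n with
  | 0 => (A \subset F) && conflict_free A
  | n'.+1 =>
      [&& A \subset F, conflict_free A &
        [forall y in F, attacks_set y A ==>
           ~~ [exists B : {set T}, wadm_fuel n' (reduct F A) B && (y \in B)]]]
  end.

Definition weakly_admissible (F A : {set T}) : bool := wadm_fuel #|F| F A.

Inductive label := lab_in | lab_out | lab_undec.

Definition weakly_complete_labeling (F : {set T}) (L : T -> label) : Prop :=
  forall a, a \in F ->
    (L a = lab_in -> forall b, b \in F -> att b a -> L b <> lab_in) /\
    (L a = lab_out -> exists2 b, b \in F & att b a /\ L b = lab_in) /\
    (L a = lab_undec ->
       (exists2 b, b \in F & att b a /\ L b = lab_undec) /\
       (forall b, b \in F -> att b a -> L b <> lab_in)).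

Definition is_in (l : label) : bool := if l is lab_in then true else false.

Definition weakly_complete_extension (F E : {set T}) : Prop :=
  exists L, weakly_complete_labeling F L /\ E = [set a in F | is_in (L a)].
End AF.

(* Main.v *)
Require Import Defs.
From mathcomp Require Import all_boot.
Set Implicit Arguments.
Unset Strict Implicit.
Unset Printing Implicit Defensive.

Section S.
Variable T : finType.
Variable att : rel T.
Local Notation wa := (weakly_admissible att).
Local Notation red := (reduct att).

Lemma red_sub (F A : {set T}) : red F A \subset F.
Proof. by apply/subsetP=> x; rewrite inE => /andP[]. Qed.

Lemma red_card (F A : {set T}) : A \subset F -> A != set0 -> #|red F A| < #|F|.
Proof.
move=> AF /set0Pn[a aA]; apply: proper_card; apply/properP; split; first exact: red_sub.
exists a; first exact: (subsetP AF).
by rewrite !inE aA.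
Qed.

Lemma fuel_eq n : forall m (F A : {set T}), #|F| <= n -> #|F| <= m ->
  wadm_fuel att n F A = wadm_fuel att m F A.
Proof.
elim: n => [|n IH] [|m] F A //=.
- rewrite leqn0 cards_eq0 => /eqP -> _.
  case: (A \subset _); case: (conflict_free _ _) => //=; apply/esym/forallP => y; by rewrite inE.
- rewrite leqn0 cards_eq0 => _ /eqP ->.
  case: (A \subset _); case: (conflict_free _ _) => //=; apply/forallP => y; by rewrite inE.
- move=> hn hm.
  case AF: (A \subset F) => //=; congr (_ && _).
  have [->|A0] := eqVneq A set0.
    have E : forall y, attacks_set att y set0 = false.
      by move=> y; apply/existsP => -[a]; rewrite inE.
    by transitivity true; [|symmetry]; apply/forallP => y; rewrite E /= implybT.
  have hc := red_card AF A0.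
  apply: eq_forallb => y; congr (_ ==> _); congr (_ ==> _); congr (~~ _).
  apply: eq_existsb => B; rewrite (IH m) //; rewrite -ltnS; exact: leq_trans hc _.
Qed.

Lemma attacks_set0 y : attacks_set att y set0 = false.
Proof. by apply/existsP => -[a]; rewrite inE. Qed.

Lemma wadm_unfold (F A : {set T}) : wa F A =
  [&& A \subset F, conflict_free att A &
    [forall y in F, attacks_set att y A ==>
       ~~ [exists B : {set T}, wa (red F A) B && (y \in B)]]].
Proof.
rewrite /weakly_admissible; case E: #|F| => [|n] /=.
  move/eqP: E; rewrite cards_eq0 => /eqP ->.
  case: (A \subset _); case: (conflict_free _ _) => //=; apply/esym/forallP => y; by rewrite inE.
case AF: (A \subset F) => //=; congr (_ && _).
have [->|A0] := eqVneq A set0.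
  by transitivity true; [|symmetry]; apply/forallP => y; rewrite attacks_set0 /= implybT.
have hc := red_card AF A0; rewrite E ltnS in hc.
apply: eq_forallb => y; congr (_ ==> _); congr (_ ==> _); congr (~~ _).
by apply: eq_existsb => B; rewrite (@fuel_eq n #|red F A|).
Qed.

Lemma wadm_sub (F A : {set T}) : wa F A -> A \subset F.
Proof. by rewrite wadm_unfold => /andP[]. Qed.

Lemma wadm_cf (F A : {set T}) : wa F A -> conflict_free att A.
Proof. by rewrite wadm_unfold => /and3P[]. Qed.

Lemma wadm_att (F A B : {set T}) y : wa F A -> y \in F -> attacks_set att y A ->
  wa (red F A) B -> y \notin B.
Proof.
rewrite wadm_unfold => /and3P[_ _ /forallP/(_ y)] H yF yA wB.
move: H; rewrite yF yA /= => /existsPn/(_ B); by rewrite wB.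
Qed.

Lemma wadm_intro (F A : {set T}) : A \subset F -> conflict_free att A ->
  (forall y B, y \in F -> attacks_set att y A -> wa (red F A) B -> y \notin B) ->
  wa F A.
Proof.
move=> AF cA H; rewrite wadm_unfold AF cA /=; apply/forallP => y.
apply/implyP => yF; apply/implyP => yA; apply/existsPn => B.
by apply/negP => /andP[wB yB]; move: (H y B yF yA wB); rewrite yB.
Qed.

Lemma cfP (A : {set T}) : reflect (forall a b, a \in A -> b \in A -> ~~ att a b) (conflict_free att A).
Proof.
apply: (iffP forallP) => [H a b aA bA|H a].
  by move: (H a); rewrite aA /= => /forallP/(_ b); rewrite bA.
by apply/implyP => aA; apply/forallP => b; apply/implyP => bA; exact: H.
Qed.

Lemma attsP y (A : {set T}) : reflect (exists2 a, a \in A & att y a) (attacks_set att y A).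
Proof. by apply: (iffP existsP) => [[a /andP[]]|[a ? ?]]; [exists a|exists a; apply/andP]. Qed.

Lemma redP (F A : {set T}) x : reflect [/\ x \in F, x \notin A & forall a, a \in A -> ~~ att a x] (x \in red F A).
Proof.
rewrite !inE; apply: (iffP idP).
  case/andP => /norP[xA /nandP H] xF; split => // a aA; apply/negP => ax.
  case: H; [by rewrite xF | move/existsPn/(_ a); by rewrite aA ax].
case=> xF xA H; rewrite xF andbT (negbTE xA) /=; apply/existsPn => a.
by apply/negP => /andP[aA ax]; move: (H a aA); rewrite ax.
Qed.

Lemma redU (F A B : {set T}) : red F (A :|: B) = red (red F A) B.
Proof.
apply/setP => x; apply/redP/redP.
  case=> xF xAB H; split.
  - apply/redP; split => //; first by apply: contra xAB; rewrite inE => ->.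
    by move=> a aA; apply: H; rewrite inE aA.
  - by apply: contra xAB; rewrite inE => ->; rewrite orbT.
  - by move=> b bB; apply: H; rewrite inE bB orbT.
case=> /redP[xF xA HA] xB HB; split => //; first by rewrite inE negb_or xA.
by move=> a; rewrite inE => /orP[]; [apply: HA|apply: HB].
Qed.

Lemma wadmU_core (F A B : {set T}) :
  (A != set0 -> forall C D : {set T}, wa (red F A) C -> wa (red (red F A) C) D ->
      wa (red F A) (C :|: D)) ->
  wa F A -> wa (red F A) B -> wa F (A :|: B).
Proof.
move=> IH wA wB.
have AF := wadm_sub wA; have BR := wadm_sub wB.
have BF : B \subset F := subset_trans BR (red_sub F A).
apply: wadm_intro.
- by rewrite subUset AF BF.
- apply/cfP => a b; rewrite !inE => /orP[aA|aB] /orP[bA|bB].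
  + exact: (cfP _ (wadm_cf wA)).
  + by case/redP: (subsetP BR b bB) => _ _ /(_ a aA).
  + apply/negP => ab; have := wadm_att wA (subsetP BF a aB) (introT (attsP _ _) (ex_intro2 _ _ b bA ab)) wB.
    by rewrite aB.
  + exact: (cfP _ (wadm_cf wB)).
- move=> y C yF /attsP[x]; rewrite inE redU => /orP[xA|xB] yx wC; apply/negP => yC.
  + have A0 : A != set0 by apply/set0Pn; exists x.
    have wBC := IH A0 B C wB wC.
    have := wadm_att wA yF (introT (attsP _ _) (ex_intro2 _ _ x xA yx)) wBC.
    by rewrite inE yC orbT.
  + have yR : y \in red F A.
      by case/redP: (subsetP (wadm_sub wC) y yC).
    have := wadm_att wB yR (introT (attsP _ _) (ex_intro2 _ _ x xB yx)) wC.
    by rewrite yC.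
Qed.

Lemma wadmU n : forall (F A B : {set T}), #|F| <= n -> wa F A -> wa (red F A) B -> wa F (A :|: B).
Proof.
elim: n => [|n IH] F A B hn wA; apply: (wadmU_core _ wA) => A0 C D;
  have := red_card (wadm_sub wA) A0.
  by rewrite leqn0 in hn; rewrite (eqP hn).
move=> hc; apply: IH; rewrite -ltnS; exact: leq_trans hc hn.
Qed.

Lemma wadm0 (F : {set T}) : wa F set0.
Proof.
apply: wadm_intro; first exact: sub0set.
  by apply/cfP => a b; rewrite inE.
by move=> y B _; rewrite attacks_set0.
Qed.

Lemma wadm1 (F : {set T}) x : x \in F -> (forall b, b \in F -> ~~ att b x) -> wa F [set x].
Proof.
move=> xF H; apply: wadm_intro.
- by rewrite sub1set.
- by apply/cfP => a b; rewrite !inE => /eqP -> /eqP ->; apply: H.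
- move=> y B yF /attsP[z]; rewrite inE => /eqP ->; by rewrite (negbTE (H y yF)).
Qed.

Definition Ein (F : {set T}) (L : T -> label) := [set a in F | is_in (L a)].

Lemma Ein_mem (G : {set T}) L x : (x \in Ein G L) = (x \in G) && is_in (L x).
Proof. by rewrite inE. Qed.

Definition good (F A : {set T}) :=
  exists L, weakly_complete_labeling att F L /\ A \subset Ein F L /\ wa F (Ein F L).

Lemma step (F A : {set T}) : wa F A -> good (red F A) set0 -> good F A.
Proof.
move=> wA [L' [wcl' [_ wE']]].
have AF := wadm_sub wA.
pose L x := if x \in A then lab_in else if x \in red F A then L' x else lab_out.
have EE : Ein F L = A :|: Ein (red F A) L'.
  apply/setP => x; rewrite in_setU !Ein_mem /L.
  case xA: (x \in A); first by rewrite (subsetP AF x xA).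
  case xR: (x \in red F A) => /=; last by rewrite andbF.
  by rewrite (subsetP (red_sub F A) x xR).
have inAtt : forall b, b \in F -> L b = lab_in -> b \in A \/ (b \in red F A /\ L' b = lab_in).
  move=> b bF; rewrite /L; case: (b \in A); first by left.
  by case: (b \in red F A) => // ->; right.
have noin : forall a, a \in A -> forall b, b \in F -> att b a -> L b <> lab_in.
  move=> a aA b bF ba /(inAtt b bF) [bA|[bR Lb]].
    by move: (cfP _ (wadm_cf wA) b a bA aA); rewrite ba.
  have := wadm_att wA bF (introT (attsP _ _) (ex_intro2 _ _ a aA ba)) wE'.
  by rewrite Ein_mem bR Lb.
have noinR : forall a, a \in red F A ->
    (forall b, b \in red F A -> att b a -> L' b <> lab_in) ->
    forall b, b \in F -> att b a -> L b <> lab_in.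
  move=> a aR H b bF ba /(inAtt b bF) [bA|[bR Lb]].
    by case/redP: aR => _ _ /(_ b bA); rewrite ba.
  exact: (H b bR ba).
exists L; split; last by rewrite EE subsetUl; split => //; apply: (wadmU (leqnn _)).
move=> a aF.
case aA: (a \in A).
  have La : L a = lab_in by rewrite /L aA.
  by rewrite La; split; [move=> _; exact: noin|split].
case aR: (a \in red F A).
  have La : L a = L' a by rewrite /L aA aR.
  have bL : forall b, b \in red F A -> L b = L' b.
    by move=> b bR; rewrite /L bR; case/redP: bR => _ /negbTE ->.
  case: (wcl' a aR) => H1 [H2 H3]; rewrite La; split; last split.
  - by move=> /H1; exact: noinR.
  - move=> /H2 [b bR [ba Lb]]; exists b; first exact: (subsetP (red_sub F A)).
    by rewrite bL.
  - move=> /H3 [[b bR [ba Lb]] H4]; split; last exact: noinR.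
    by exists b; [exact: (subsetP (red_sub F A))|rewrite bL].
have La : L a = lab_out by rewrite /L aA aR.
rewrite La; split => //; split => // _.
case: (pickP (fun b => (b \in A) && att b a)) => [b /andP[bA ba]|none].
  exists b; first exact: (subsetP AF).
  by rewrite /L bA.
move/negP: aR; case; apply/redP; split => //; first by rewrite aA.
by move=> b bA; move: (none b); rewrite bA /= => ->.
Qed.

Lemma base (F : {set T}) : (forall B, wa F B -> B = set0) -> good F set0.
Proof.
move=> H; exists (fun _ => lab_undec).
have E0 : Ein F (fun _ => lab_undec) = set0 by apply/setP => x; rewrite Ein_mem inE andbF.
rewrite E0; split; last by split; [exact: sub0set|exact: wadm0].
move=> a aF; split => //; split => // _; split => //.
case: (pickP (fun b => (b \in F) && att b a)) => [b /andP[bF ba]|none].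
  by exists b.
have : wa F [set a].
  by apply: wadm1 => // b bF; move: (none b); rewrite bF /= => ->.
move/H/setP/(_ a); by rewrite !inE eqxx.
Qed.

Lemma main_good n : forall (F A : {set T}), #|F| <= n -> wa F A -> good F A.
Proof.
elim: n => [|n IH] F A hn wA.
  move: hn; rewrite leqn0 cards_eq0 => /eqP F0.
  have A0 : A = set0 by apply/eqP; rewrite -subset0 -F0; exact: wadm_sub wA.
  rewrite A0; apply: base => B /wadm_sub; rewrite F0 subset0 => /eqP.
  done.
have gen : forall B, wa F B -> B != set0 -> good F B.
  move=> B wB B0; apply: step => //; apply: IH; last exact: wadm0.
  rewrite -ltnS; apply: leq_trans hn; exact: red_card (wadm_sub wB) B0.
have [A0|A0] := eqVneq A set0; last exact: gen.
rewrite A0.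
case: (pickP (fun B => wa F B && (B != set0))) => [B /andP[wB B0]|none].
  have [L [h1 [_ h3]]] := gen B wB B0.
  by exists L; split => //; split => //; exact: sub0set.
apply: base => B wB; apply/eqP; move: (none B); rewrite wB /=; by move/negbFE.
Qed.
End S.

Theorem mainTheorem16 (T : finType) (att : rel T) (F A : {set T}) :
  weakly_admissible att F A ->
  exists E : {set T}, weakly_complete_extension att F E /\ A \subset E.
Proof.
move=> wA; have [L [h1 [h2 _]]] := main_good (leqnn #|F|) wA.
by exists (Ein F L); split => //; exists L.
Qed.
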